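(* Let $m>n$ be coprime positive integers, $\lambda\in X$, $\Lambda=x(\lambda)$ and $\alpha=\epsilon_i-\delta_j$ ($i\in[n]$, $j\in[m]$). If $\Lambda\in\Pi_\alpha$, then either $\lambda\in X_\alpha$, or $(m,1^{n-1})\subseteq\lambda$ (i.e. $\lambda_1=m$ and $\lambda_n\ge1$) and $\alpha=\epsilon_n-\delta_1$.
   Context: $X$ is the set of partitions $\lambda=(\lambda_1\ge\dots\ge\lambda_n\ge0)$ with $\lambda_1\le m$, drawn in an $n\times m$ rectangle with rows $\epsilon_1,\dots,\epsilon_n$ top to bottom and columns $\delta_1,\dots,\delta_m$; the diagram consists of boxes $\epsilon_i-\delta_j$ with $j\le\lambda_{n+1-i}$; $\lambda'_j=\#\{i:\lambda_i\ge j\}$. $X_\alpha$ is the set of $\lambda$ for which the box $\alpha$ is an outer corner (not in $\lambda$, and adding it gives an element of $X$). $x(\lambda)=(a_1,\dots,a_n|b_1,\dots,b_m)$ with $a_i=m(n-i)+n\lambda_{n+1-i}$, $b_j=n(j-1)+m\lambda'_j$. $\Pi_\alpha=\{\Lambda: a_i=b_j\}$. *)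

(* Defs.v *)
From mathcomp Require Import all_boot.
Set Implicit Arguments. Unset Strict Implicit. Unset Printing Implicit Defensive.

(* Partitions lambda = (lambda_1 >= ... >= lambda_n >= 0) are represented by
   functions lam : nat -> nat, 1-indexed: lambda_k = lam k for 1 <= k <= n.
   Values of lam outside 1..n are never used. *)

Definition in_X (n m : nat) (lam : nat -> nat) : Prop :=
  (forall k, 1 <= k -> k < n -> lam k.+1 <= lam k) /\
  (forall k, 1 <= k <= n -> lam k <= m).

Definition conj_part (n : nat) (lam : nat -> nat) (j : nat) : nat :=
  count (fun k => j <= lam k) (iota 1 n).

(* the box eps_i - delta_j (1 <= i <= n, 1 <= j <= m) lies in the diagram of lambda *)
Definition in_diagram (n : nat) (lam : nat -> nat) (i j : nat) : Prop :=
  j <= lam (n.+1 - i).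

Definition in_X_alpha (n m : nat) (lam : nat -> nat) (i j : nat) : Prop :=
  ~ in_diagram n lam i j /\
  exists mu, in_X n m mu /\
    forall i' j', 1 <= i' <= n -> 1 <= j' <= m ->
      (in_diagram n mu i' j' <-> (in_diagram n lam i' j' \/ (i' = i /\ j' = j))).

Definition xa (n m : nat) (lam : nat -> nat) (i : nat) : nat :=
  m * (n - i) + n * lam (n.+1 - i).
Definition xb (n m : nat) (lam : nat -> nat) (j : nat) : nat :=
  n * (j - 1) + m * conj_part n lam j.

Definition in_Pi (n m : nat) (lam : nat -> nat) (i j : nat) : Prop :=
  xa n m lam i = xb n m lam j.

(* Main.v *)
Require Import Defs.
From mathcomp Require Import all_boot zify.

Lemma arith (n m i j L c : nat) :
  0 < n -> n < m -> coprime m n -> 1 <= i <= n -> 1 <= j <= m -> L <= m -> c <= n ->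
  m * (n - i) + n * L = n * (j - 1) + m * c ->
  (L = j - 1 /\ c = n - i) \/ (j = 1 /\ L = m /\ i = n /\ c = n).
Proof.
move=> n0 nm co hi hj hL hc E.
have key : forall d e, n * d = m * e -> d < m -> d = 0.
  move=> d e hd dm.
  have : m %| n * d by apply/dvdnP; exists e; rewrite hd mulnC.
  rewrite Gauss_dvdr // => /dvdnP [k hk]. clear hd; subst d; case: k dm => [|k] /=; nia.
case: (leqP (j - 1) L) => hjL.
- have E2 : n * (L - (j - 1)) = m * (c - (n - i)).
    have : n * (j - 1) <= n * L by rewrite leq_mul2l hjL orbT.
    move: E; set J := j - 1; set N := n - i; clearbody J N; move=> E h; rewrite !mulnBr; lia.
  case: (ltnP (L - (j-1)) m) => hd.
  + move: (key _ _ E2 hd) => h0. left. nia.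
  + right. nia.
- have E2 : n * ((j - 1) - L) = m * ((n - i) - c).
    have : n * L <= n * (j - 1) by rewrite leq_mul2l (ltnW hjL) orbT.
    move: E; set J := j - 1; set N := n - i; clearbody J N; move=> E h; rewrite !mulnBr; lia.
  have hd : (j - 1) - L < m by lia.
  move: (key _ _ E2 hd). lia.
Qed.

Lemma mono n m lam k d : in_X n m lam -> 1 <= k -> k + d <= n -> lam (k + d) <= lam k.
Proof.
move=> [hd _] hk; elim: d => [|d IH] h; first by rewrite addn0.
apply: leq_trans (IH _); last lia.
rewrite addnS; apply: hd; lia.
Qed.

Lemma conj_lt n m lam r j : in_X n m lam -> 1 <= r <= n -> lam r < j ->
  conj_part n lam j <= r - 1.
Proof.
move=> hX hr hl; rewrite /conj_part.
have -> : n = (r - 1) + (n - (r - 1)) by lia.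
rewrite iotaD count_cat.
have -> : count (fun k => j <= lam k) (iota (1 + (r - 1)) (n - (r - 1))) = 0.
  apply/eqP; rewrite -leqn0 leqNgt -has_count; apply/hasPn => k.
  rewrite mem_iota => hk; rewrite -ltnNge.
  have := @mono n m lam r (k - r) hX. have -> : r + (k - r) = k by lia. lia.
rewrite addn0; apply: leq_trans (count_size _ _) _; rewrite size_iota //.
Qed.

Theorem lemma4p5 (n m : nat) (lam : nat -> nat) (i j : nat) :
  0 < n -> n < m -> coprime m n ->
  in_X n m lam ->
  1 <= i <= n -> 1 <= j <= m ->
  in_Pi n m lam i j ->
  in_X_alpha n m lam i j \/
  ((lam 1 = m /\ 1 <= lam n) /\ (i = n /\ j = 1)).
Proof.
move=> n0 nm co hX hi hj; rewrite /in_Pi /xa /xb => E.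
have hc : conj_part n lam j <= n by rewrite /conj_part; apply: leq_trans (count_size _ _) _; rewrite size_iota.
have hL : lam (n.+1 - i) <= m by apply: hX.2; lia.
case: (@arith n m i j _ _ n0 nm co hi hj hL hc E) => [[hl hcj]|[-> [hl [hin hcn]]]].
- left; split; first by rewrite /in_diagram hl; lia.
  set r := n.+1 - i.
  have hprev : 1 < r -> j <= lam r.-1.
    move=> r1; rewrite leqNgt; apply/negP => hlt.
    have := @conj_lt n m lam r.-1 j hX _ hlt. rewrite hcj. lia.
  exists (fun k => if k == r then j else lam k); split.
  + split.
    * move=> k k1 kn.
      case: ifP => /eqP h1; case: ifP => /eqP h2.
      -- lia.
      -- have := hprev. rewrite -h1 /=. lia.
      -- have := hX.1 k k1 kn. rewrite h2 -/r hl. lia.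
      -- exact: hX.1.
    * move=> k hk; case: ifP => _; [lia| exact: hX.2].
  + move=> i' j' hi' hj'; rewrite /in_diagram.
    case: (eqVneq (n.+1 - i') r) => e.
    * have -> : i' = i by lia. rewrite hl; lia.
    * have : i' <> i by move=> h; subst i'; rewrite eqxx in e.
      intuition.
- right; subst i. have e1 : n.+1 - n = 1 by lia. rewrite e1 in hl; split => //; split => //.
  have : all (fun k => 1 <= lam k) (iota 1 n) by rewrite all_count size_iota; apply/eqP; exact: hcn.
  move=> /allP /(_ n).
  rewrite mem_iota; apply; lia.
Qed.
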